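(* Let $n\ge2$, $d\ge2$ and $\mathbf{m}=(d-1,1,0,\ldots,0)\in\mathbb{N}^n$ (any $\mathbf{m}$ with $|\mathbf{m}|=d$ and $\max(\mathbf{m})=d-1$ is of this form up to permuting coordinates). Then \[\mathcal{A}_{n,d}\setminus\mathcal{A}_{n,d,\mathbf{m}}=\begin{cases}\{(2s+1,2t+1,0,\ldots,0): s,t\in\mathbb{N}\} & \text{if } d=2,\\ \{(ds-1,1,0,\ldots,0): s\ge1\} & \text{if } d>2.\end{cases}\]
   Context: For $\mathbf{a}\in\mathbb{N}^n$, $|\mathbf{a}|=\sum_i a_i$ and $\max(\mathbf{a})=\max_i a_i$. $T_{n,d}=\{\mathbf{a}\in\mathbb{N}^n:|\mathbf{a}|=d\}$; $\mathcal{A}_{n,d}$ is the (additive) semigroup generated by $T_{n,d}$; for $\mathbf{m}\in T_{n,d}$, $\mathcal{A}_{n,d,\mathbf{m}}$ is the semigroup generated by $T_{n,d}\setminus\{\mathbf{m}\}$. *)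

(* Defs.v *)
From mathcomp Require Import all_boot.

Unset Strict Implicit.
Unset Printing Implicit Defensive.

Definition vecN (n : nat) := {ffun 'I_n -> nat}.

Definition vnorm1 (n : nat) (a : vecN n) : nat := \sum_(i < n) a i.

Definition vzero (n : nat) : vecN n := [ffun _ => 0].
Definition vadd (n : nat) (a b : vecN n) : vecN n := [ffun i => a i + b i].

(* The additive semigroup generated by a set G of vectors: all finite sums
   of elements of G (the empty sum 0 included; this does not affect the
   set difference considered below since 0 lies in every such semigroup). *)
Inductive in_semigroup (n : nat) (G : vecN n -> Prop) : vecN n -> Prop :=
| sg_zero : in_semigroup n G (vzero n)
| sg_add : forall g a, G g -> in_semigroup n G a -> in_semigroup n G (vadd n g a).

Definition T_nd (n d : nat) (a : vecN n) : Prop := vnorm1 n a = d.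

Definition A_nd (n d : nat) : vecN n -> Prop := in_semigroup n (T_nd n d).

Definition A_ndm (n d : nat) (m : vecN n) : vecN n -> Prop :=
  in_semigroup n (fun a => T_nd n d a /\ a <> m).

Definition vec2 (n x y : nat) : vecN n :=
  [ffun i : 'I_n => if nat_of_ord i == 0 then x
                    else if nat_of_ord i == 1 then y else 0].

(* Main.v *)
Require Import Defs.
From mathcomp Require Import all_boot.
From mathcomp Require Import zify.
From Stdlib Require Import Classical.
Set Implicit Arguments.
Unset Strict Implicit.
Unset Printing Implicit Defensive.

Definition vle {n} (a b : vecN n) := forall i, a i <= b i.
Definition vsub {n} (a b : vecN n) : vecN n := [ffun i => a i - b i].
Definition vunit {n} (k : 'I_n) (t : nat) : vecN n := [ffun i => if i == k then t else 0].
Definition vupd {n} (a : vecN n) (k : 'I_n) (t : nat) : vecN n :=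
  [ffun i => if i == k then t else a i].

Lemma norm_add n (a b : vecN n) : vnorm1 n (vadd n a b) = vnorm1 n a + vnorm1 n b.
Proof. rewrite /vnorm1 -big_split /=; apply: eq_bigr => i _; by rewrite ffunE. Qed.

Lemma norm_zero n : vnorm1 n (vzero n) = 0.
Proof. rewrite /vnorm1 big1 // => i _; by rewrite ffunE. Qed.

Lemma norm_unit n (k : 'I_n) t : vnorm1 n (vunit k t) = t.
Proof.
rewrite /vnorm1 (bigD1 k) //= ffunE eqxx big1 ?addn0 // => i /negbTE.
by rewrite ffunE => ->.
Qed.

Lemma norm_upd n (a : vecN n) k t : vnorm1 n (vupd a k t) + a k = vnorm1 n a + t.
Proof.
rewrite /vnorm1 (bigD1 k) //= [X in _ = X + _](bigD1 k) //= ffunE eqxx.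
rewrite (eq_bigr (fun i => a i)); last first.
  by move=> i /negbTE; rewrite ffunE => ->.
rewrite addnAC [RHS]addnAC addnC [t + _]addnC [RHS]addnC; reflexivity.
Qed.

Lemma vadd_sub n (a b : vecN n) : vle b a -> vadd n b (vsub a b) = a.
Proof. move=> ba; apply/ffunP => i; rewrite !ffunE; by rewrite subnKC. Qed.

Lemma norm0 n (a : vecN n) : vnorm1 n a = 0 -> a = vzero n.
Proof.
move=> h; apply/ffunP => i; rewrite ffunE.
have: a i <= vnorm1 n a by rewrite /vnorm1 (bigD1 i) //= leq_addr.
by rewrite h leqn0 => /eqP.
Qed.

Lemma extend n (c a : vecN n) k : vle c a -> vnorm1 n c <= k <= vnorm1 n a ->
  exists g, [/\ vle c g, vle g a & vnorm1 n g = k].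
Proof.
move=> ca /andP[ck ka].
have [j ej] : exists j, k = vnorm1 n c + j by exists (k - vnorm1 n c); lia.
subst k; clear ck; move: ka; elim: j => [|j IH] ka.
  by exists c; split => //; rewrite ?addn0.
have [|g [cg ga ng]] := IH; first lia.
case: (pickP (fun i => g i < a i)) => [i gi|H].
  exists (vadd n g (vunit i 1)); split.
  - move=> x; rewrite !ffunE; apply: leq_trans (cg x) _; exact: leq_addr.
  - move=> x; rewrite !ffunE; case: eqP => [->|_]; [by rewrite addn1 | by rewrite addn0].
  - rewrite norm_add norm_unit ng; lia.
exfalso.
have : vnorm1 n a <= vnorm1 n g.
  rewrite /vnorm1; apply: leq_sum => i _.
  by move/negbT: (H i); rewrite /= -leqNgt.
lia.
Qed.

Lemma decomp n (G P : vecN n -> Prop) :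
  (forall a, P a -> a = vzero n \/ exists g r,
     [/\ G g, P r, a = vadd n g r & vnorm1 n r < vnorm1 n a]) ->
  forall a, P a -> in_semigroup n G a.
Proof.
move=> step a.
have [m ltam] := ubnP (vnorm1 n a); elim: m a ltam => // m IH a lt Pa.
case: (step a Pa) => [->|[g [r [Gg Pr ea lr]]]]; first exact: sg_zero.
subst a; apply: sg_add => //; apply: IH => //.
exact: leq_trans lr lt.
Qed.

Lemma And_dvd n d a : A_nd n d a -> d %| vnorm1 n a.
Proof.
elim => [|g b Tg _ IH]; first by rewrite norm_zero.
rewrite norm_add; apply: dvdn_add => //; by rewrite Tg.
Qed.

Lemma step_help n d (a g : vecN n) : 0 < d -> vle g a -> vnorm1 n g = d ->
  d %| vnorm1 n a -> [/\ d %| vnorm1 n (vsub a g), a = vadd n g (vsub a g)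
  & vnorm1 n (vsub a g) < vnorm1 n a].
Proof.
move=> d0 ga ng da.
have e := @vadd_sub n a g ga.
have en : vnorm1 n g + vnorm1 n (vsub a g) = vnorm1 n a by rewrite -norm_add e.
split => //; last lia.
by move: da; rewrite -en ng dvdn_addr.
Qed.

Lemma dvd_And n d a : 0 < d -> d %| vnorm1 n a -> A_nd n d a.
Proof.
move=> d0; apply: (@decomp n _ (fun a => d %| vnorm1 n a)) => {}a da.
case: (eqVneq (vnorm1 n a) 0) => [/norm0 -> | nz]; first by left.
right.
have hA : d <= vnorm1 n a by apply: dvdn_leq => //; lia.
have z0 : vle (vzero n) a by move=> i; rewrite ffunE.
have zb : vnorm1 n (vzero n) <= d <= vnorm1 n a by rewrite norm_zero hA.
have [g [_ ga ng]] := extend z0 zb.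
have [h1 h2 h3] := step_help d0 ga ng da.
by exists g, (vsub a g); split.
Qed.

Definition o0 n (hn : 1 < n) : 'I_n := Ordinal (ltnW hn).
Definition o1 n (hn : 1 < n) : 'I_n := Ordinal hn.
Definition restz n (a : vecN n) := forall i : 'I_n, 2 <= i -> a i = 0.

Lemma o10 n (hn : 1 < n) : (o1 hn == o0 hn) = false.
Proof. by rewrite -(inj_eq val_inj). Qed.
Lemma o01 n (hn : 1 < n) : (o0 hn == o1 hn) = false.
Proof. by rewrite -(inj_eq val_inj). Qed.
Lemma oge2 n (hn : 1 < n) (k : 'I_n) : 2 <= k ->
  [/\ (k == o0 hn) = false, (k == o1 hn) = false, (o0 hn == k) = false & (o1 hn == k) = false].
Proof. by move=> k2; rewrite -!(inj_eq val_inj) /=; case: (nat_of_ord k) k2 => [|[|]]. Qed.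

Lemma norm_split n (hn : 1 < n) (a : vecN n) :
  vnorm1 n a = a (o0 hn) + a (o1 hn) + \sum_(i < n | 2 <= i) a i.
Proof.
rewrite /vnorm1 (bigD1 (o0 hn)) //= (bigD1 (o1 hn)) //=.
rewrite addnA; congr (_ + _); apply: eq_bigl => i.
by rewrite -!(inj_eq val_inj) /=; case: (nat_of_ord i) => [|[|]].
Qed.

Lemma norm_restz n (hn : 1 < n) (a : vecN n) : restz a ->
  vnorm1 n a = a (o0 hn) + a (o1 hn).
Proof. by move=> rz; rewrite (norm_split hn) big1 ?addn0. Qed.

Lemma vec2_o0 n (hn : 1 < n) x y : vec2 n x y (o0 hn) = x.
Proof. by rewrite ffunE. Qed.
Lemma vec2_o1 n (hn : 1 < n) x y : vec2 n x y (o1 hn) = y.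
Proof. by rewrite ffunE. Qed.
Lemma restz_vec2 n x y : restz (vec2 n x y).
Proof. by move=> i; rewrite ffunE; case: (nat_of_ord i) => [|[|]]. Qed.

Lemma vec2_eq n (hn : 1 < n) (a : vecN n) : restz a -> a = vec2 n (a (o0 hn)) (a (o1 hn)).
Proof.
move=> rz; apply/ffunP => i; rewrite ffunE.
case: i => [[|[|k]] Hi] /=.
- by congr (a _); apply: val_inj.
- by congr (a _); apply: val_inj.
- by apply: rz.
Qed.

Lemma norm_vec2 n (hn : 1 < n) x y : vnorm1 n (vec2 n x y) = x + y.
Proof. by rewrite (norm_restz hn (@restz_vec2 n x y)) vec2_o0 vec2_o1. Qed.

Lemma restz_add n (g b : vecN n) : restz (vadd n g b) -> restz g /\ restz b.
Proof.
move=> rz; split => i hi; have := rz i hi; rewrite ffunE; lia.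
Qed.

Lemma Am_inv_gt n d (hn : 1 < n) a : A_ndm n d (vec2 n d.-1 1) a -> restz a ->
  a (o1 hn) <> 1.
Proof.
elim => [|g b [Tg gm] _ IH] rz; first by rewrite ffunE.
have [rg rb] := restz_add rz.
rewrite ffunE => h.
have ng := norm_restz hn rg; rewrite Tg in ng.
case g1: (g (o1 hn)) => [|[|k]]; rewrite g1 in h.
- by apply: IH.
- apply: gm; rewrite (vec2_eq hn rg) g1; congr vec2; lia.
- lia.
Qed.

Lemma Am_inv2 n (hn : 1 < n) a : A_ndm n 2 (vec2 n 1 1) a -> restz a ->
  odd (a (o0 hn)) = false /\ odd (a (o1 hn)) = false.
Proof.
elim => [|g b [Tg gm] _ IH] rz; first by rewrite !ffunE.
have [rg rb] := restz_add rz.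
have [IH0 IH1] := IH rb.
have ng := norm_restz hn rg; rewrite Tg in ng.
have [e0 e1] : odd (g (o0 hn)) = false /\ odd (g (o1 hn)) = false.
  case g0: (g (o0 hn)) ng => [|[|[|k]]] ng.
  - have -> : g (o1 hn) = 2 by lia. by [].
  - exfalso; apply: gm; rewrite (vec2_eq hn rg) g0; congr vec2; lia.
  - have -> : g (o1 hn) = 0 by lia. by [].
  - lia.
by rewrite !ffunE !oddD e0 e1 IH0 IH1.
Qed.

Lemma pick_t d A a1 : 2 < d -> d %| A -> d <= A -> a1 <= A -> a1 != 1 ->
  exists t, [/\ t <= a1, t <= d, d + a1 <= A + t, t != 1 & t.+1 != a1].
Proof.
move=> hd dA hA aA a1n.
case: (leqP a1 d) => h.
  exists a1; split; (try by []); (try lia); (try (apply/eqP; lia)).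
case: (eqVneq a1 d.+1) => [e|ne].
  have hA2 : d + 2 <= A.
    move/dvdnP: dA => [s es].
    case: s es => [|[|s]] es; nia.
  exists d.-1; split; (try lia); (try (apply/eqP; lia)).
exists d; split; (try lia); (try (apply/eqP; lia)).
Qed.

Lemma Am_gt n d (hn : 1 < n) (hd : 2 < d) a : d %| vnorm1 n a ->
  ~ (a (o1 hn) = 1 /\ restz a) -> A_ndm n d (vec2 n d.-1 1) a.
Proof.
move=> da na.
apply: (@decomp n _ (fun a => d %| vnorm1 n a /\ ~ (a (o1 hn) = 1 /\ restz a))) => //.
move=> {}a {da na} [da na].
case: (eqVneq (vnorm1 n a) 0) => [/norm0 -> | nz]; first by left.
right.
have d0 : 0 < d by lia.
have hA : d <= vnorm1 n a by apply: dvdn_leq => //; lia.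
suff [g [ga ng gm rg]] : exists g, [/\ vle g a, vnorm1 n g = d,
    g <> vec2 n d.-1 1 & a (o1 hn) - g (o1 hn) <> 1].
  have [h1 h2 h3] := step_help d0 ga ng da.
  exists g, (vsub a g); split => //; split => //.
  by rewrite ffunE; case.
have [a1|a1] := eqVneq (a (o1 hn)) 1.
  have [k [k2 ak]] : exists k : 'I_n, 2 <= k /\ a k <> 0.
    apply: NNPP => H; apply: na; split => // i hi; apply: NNPP => ne; apply: H.
    by exists i.
  have [k0 k1 k0' k1'] := oge2 hn k2.
  pose c := vadd n (vunit (o1 hn) 1) (vunit k 1).
  have ca : vle c a.
    move=> x; rewrite !ffunE; case: (eqVneq x (o1 hn)) => [->|xo].
      by rewrite k1' a1.
    case: (eqVneq x k) => [->|xk] //=.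
    by rewrite add0n lt0n; apply/eqP.
  have nc : vnorm1 n c = 2 by rewrite norm_add !norm_unit.
  have cb : vnorm1 n c <= d <= vnorm1 n a by rewrite nc; apply/andP; split; lia.
  have [g [cg ga ng]] := extend ca cb.
  exists g; split => //.
    move=> e; have := cg k; rewrite e (@restz_vec2 n _ _ k k2) !ffunE k1 eqxx.
    by [].
  have := cg (o1 hn); have := ga (o1 hn); rewrite !ffunE eqxx k1' a1.
  lia.
have aA : a (o1 hn) <= vnorm1 n a by rewrite (norm_split hn); lia.
have [t [t1 td tA t1' ta]] := pick_t hd da hA aA a1.
pose a' := vupd a (o1 hn) t.
pose c := vunit (o1 hn) t.
have ca : vle c a' by move=> x; rewrite !ffunE; case: eqP.
have a'a : vle a' a by move=> x; rewrite !ffunE; case: eqP => [->|].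
have na' : vnorm1 n a' + a (o1 hn) = vnorm1 n a + t := norm_upd a (o1 hn) t.
have cb : vnorm1 n c <= d <= vnorm1 n a' by rewrite norm_unit; apply/andP; split; lia.
have [g [cg ga ng]] := extend ca cb.
have gt : g (o1 hn) = t.
  have := cg (o1 hn); have := ga (o1 hn); rewrite !ffunE eqxx; lia.
exists g; split => //.
- move=> x; exact: leq_trans (ga x) (a'a x).
- by move=> e; move: gt; rewrite e vec2_o1 => et; rewrite -et in t1'.
- rewrite gt; move/eqP: ta; lia.
Qed.

Lemma Am_2 n (hn : 1 < n) a : 2 %| vnorm1 n a ->
  ~ (odd (a (o0 hn)) /\ odd (a (o1 hn)) /\ restz a) -> A_ndm n 2 (vec2 n 1 1) a.
Proof.
move=> da na.
apply: (@decomp n _ (fun a => 2 %| vnorm1 n a /\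
   ~ (odd (a (o0 hn)) /\ odd (a (o1 hn)) /\ restz a))) => //.
move=> {}a {da na} [da na].
case: (eqVneq (vnorm1 n a) 0) => [/norm0 -> | nz]; first by left.
right.
have hA : 2 <= vnorm1 n a by apply: dvdn_leq => //; lia.
suff [g [ga ng gm rg]] : exists g, [/\ vle g a, vnorm1 n g = 2,
    g <> vec2 n 1 1 & ~~ odd (a (o0 hn) - g (o0 hn)) || ~~ odd (a (o1 hn) - g (o1 hn))].
  have [h1 h2 h3] := step_help (isT : 0 < 2) ga ng da.
  exists g, (vsub a g); split => //; split => //.
  rewrite !ffunE; move=> [e0 [e1 _]]; by rewrite e0 e1 in rg.
case: (boolP ((a (o0 hn) == 0) || (a (o1 hn) == 0))) => [z|nz2].
  have z0 : vle (vzero n) a by move=> i; rewrite ffunE.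
  have zb : vnorm1 n (vzero n) <= 2 <= vnorm1 n a by rewrite norm_zero hA.
  have [g [_ ga ng]] := extend z0 zb.
  exists g; split => //.
    move=> e; have := ga (o0 hn); have := ga (o1 hn); rewrite e !vec2_o0 !vec2_o1.
    move/orP: z => [/eqP -> | /eqP ->]; lia.
  have := ga (o0 hn); have := ga (o1 hn).
  move/orP: z => [/eqP -> | /eqP ->] => h1 h2.
    by have -> : 0 - g (o0 hn) = 0 by lia.
  by rewrite sub0n orbT.
have [a0n a1n] : a (o0 hn) != 0 /\ a (o1 hn) != 0.
  by move: nz2; rewrite negb_or => /andP.
case: (boolP (odd (a (o0 hn)))) => [od0|ev0].
  case: (boolP (odd (a (o1 hn)))) => [od1|ev1].
    have [k [k2 ak]] : exists k : 'I_n, 2 <= k /\ a k <> 0.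
      apply: NNPP => H; apply: na; split => //; split => // i hi.
      apply: NNPP => ne; apply: H; by exists i.
    have [k0 k1 k0' k1'] := oge2 hn k2.
    exists (vadd n (vunit (o0 hn) 1) (vunit k 1)); split.
    - move=> x; rewrite !ffunE; case: (eqVneq x (o0 hn)) => [->|xo].
        rewrite k0' /=; lia.
      case: (eqVneq x k) => [->|xk] //=.
      lia.
    - by rewrite norm_add !norm_unit.
    - move=> e; have := congr1 (fun f : vecN n => f k) e.
      by rewrite /= (@restz_vec2 n _ _ k k2) !ffunE k0 eqxx.
    - rewrite !ffunE eqxx k0' /= oddB; first by rewrite od0.
      lia.
  exists (vunit (o1 hn) 2); split.
  - move=> x; rewrite !ffunE; case: eqP => [->|] //.
    move: ev1 a1n; case: (a (o1 hn)) => [|[|]] //.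
  - by rewrite norm_unit.
  - move=> e; have := congr1 (fun f : vecN n => f (o0 hn)) e.
    by rewrite /= vec2_o0 ffunE o01.
  - apply/orP; right; rewrite ffunE eqxx oddB ?(negbTE ev1) //.
    move: ev1 a1n; case: (a (o1 hn)) => [|[|]] //.
exists (vunit (o0 hn) 2); split.
- move=> x; rewrite !ffunE; case: eqP => [->|] //.
  move: ev0 a0n; case: (a (o0 hn)) => [|[|]] //.
- by rewrite norm_unit.
- move=> e; have := congr1 (fun f : vecN n => f (o1 hn)) e.
  by rewrite /= vec2_o1 ffunE o10.
- apply/orP; left; rewrite ffunE eqxx oddB ?(negbTE ev0) //.
  move: ev0 a0n; case: (a (o0 hn)) => [|[|]] //.
Qed.

Theorem lemma2p18 (n d : nat) (hn : 2 <= n) (hd : 2 <= d) (a : vecN n) :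
  (A_nd n d a /\ ~ A_ndm n d (vec2 n d.-1 1) a) <->
  (if d == 2
   then exists s t : nat, a = vec2 n (2 * s + 1) (2 * t + 1)
   else exists s : nat, 1 <= s /\ a = vec2 n (d * s - 1) 1).
Proof.
case: ifP => hd2.
  move/eqP: hd2 => ?; subst d; split.
    move=> [Aa Na]; have dv := And_dvd Aa.
    apply: NNPP => nf; apply: Na; apply: (Am_2 (hn:=hn) dv) => -[od0 [od1 rz]].
    apply: nf; exists (a (o0 hn))./2, (a (o1 hn))./2.
    rewrite {1}(vec2_eq hn rz); congr vec2.
      by rewrite -{1}(odd_double_half (a (o0 hn))) od0 -muln2 mulnC addnC.
    by rewrite -{1}(odd_double_half (a (o1 hn))) od1 -muln2 mulnC addnC.
  move=> [s [t ->]]; split.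
    apply: dvd_And => //; rewrite (norm_vec2 hn).
    have -> : 2 * s + 1 + (2 * t + 1) = 2 * (s + t + 1) by lia.
    exact: dvdn_mulr.
  move/(Am_inv2 hn) => /(_ (@restz_vec2 _ _ _)).
  by rewrite vec2_o0 vec2_o1 !oddD; case: (odd s); case: (odd t); case.
have hd3 : 2 < d by move/negbT: hd2; lia.
split.
  move=> [Aa Na]; have dv := And_dvd Aa.
  apply: NNPP => nf; apply: Na; apply: (Am_gt (hn:=hn) hd3 dv) => -[a1 rz].
  apply: nf.
  have na := norm_restz hn rz; rewrite a1 in na.
  move/dvdnP: dv => [s es].
  exists s; split.
    case: s es => [|s] es //; lia.
  rewrite {1}(vec2_eq hn rz) a1; congr vec2; nia.
move=> [s [s1 ->]]; split.
  apply: dvd_And; first lia.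
  rewrite (norm_vec2 hn).
  have -> : d * s - 1 + 1 = d * s by nia.
  exact: dvdn_mulr.
move/(Am_inv_gt (hn:=hn)) => /(_ (@restz_vec2 _ _ _)).
by rewrite vec2_o1.
Qed.
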